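(* Let $m \ge 1$ be an integer, let $N \ge 0$ and $s$ be integers with $0 \le s \le N$ and $N + m - 1 > 0$, and let $y \in (0,1)$, all held fixed. For real $n > 0$ let $\beta_n$ denote the Beta-Binomial distribution on $\{0,1,\ldots,m\}$ with probability mass function \[ p(l \mid y, n, m, s, N) = \binom{m}{l}\frac{B(l + ny + s,\; m - l + n(1-y) + N - s)}{B(ny + s,\; n(1-y) + N - s)}, \qquad l = 0,1,\ldots,m, \] where $B(\cdot,\cdot)$ is the Beta function. Let $0 < \underline{n} < \overline{n}$. Then \[ y > \frac{s + m - 1}{N + m - 1} \implies \beta_{\overline{n}} \ge_{\mathrm{st}} \beta_{\underline{n}}, \] and \[ y < \frac{s}{N + m - 1} \implies \beta_{\overline{n}} \le_{\mathrm{st}} \beta_{\underline{n}}. \]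
   Context: For two probability distributions $P, Q$ on $\{0,1,\ldots,m\}$, first-order stochastic dominance $P \ge_{\mathrm{st}} Q$ means $P(\{l' : l' > l\}) \ge Q(\{l' : l' > l\})$ for every $l$ (equivalently, the cumulative distribution function of $P$ is pointwise no larger than that of $Q$); $P \le_{\mathrm{st}} Q$ means $Q \ge_{\mathrm{st}} P$. *)

(* Defs.v *)
From HB Require Import structures.
From mathcomp Require Import all_boot all_order all_algebra.
From mathcomp Require Import all_classical all_reals all_analysis.
Set Implicit Arguments. Unset Strict Implicit. Unset Printing Implicit Defensive.
Import Order.TTheory GRing.Theory Num.Theory.
Local Open Scope ring_scope.
Local Open Scope classical_set_scope.

Definition Beta (R : realType) (a b : R) : R :=
  fine (\int[@lebesgue_measure R]_(t in `]0%R, 1%R[)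
          ((t `^ (a - 1)) * ((1 - t) `^ (b - 1)))%:E)%E.

Definition bb_pmf (R : realType) (y n : R) (m s N : nat) (l : nat) : R :=
  if (l <= m)%N then
    'C(m, l)%:R
    * Beta (l%:R + n * y + s%:R) ((m - l)%:R + n * (1 - y) + N%:R - s%:R)
    / Beta (n * y + s%:R) (n * (1 - y) + N%:R - s%:R)
  else 0.

Definition upper_tail (R : realType) (P : nat -> R) (m l : nat) : R :=
  \sum_(l.+1 <= k < m.+1) P k.

Definition st_ge (R : realType) (m : nat) (P Q : nat -> R) : Prop :=
  forall l : nat, upper_tail Q m l <= upper_tail P m l.

(* Main.v *)
Require Import Defs.
From HB Require Import structures.
From mathcomp Require Import all_boot all_order all_algebra.
From mathcomp Require Import all_classical all_reals all_analysis.
From mathcomp Require Import ring lra measurable_realfun.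
Import Order.TTheory GRing.Theory Num.Theory.
Import numFieldNormedType.Exports.
Local Open Scope ring_scope.

Section Gen.
Variable R : realType.

Lemma tail_dom (P Q : nat -> R) m l :
  \sum_(0 <= k < m.+1) P k = 1 -> \sum_(0 <= k < m.+1) Q k = 1 ->
  (forall j k, (j <= l)%N -> (l < k)%N -> (k <= m)%N -> Q k * P j <= P k * Q j) ->
  upper_tail Q m l <= upper_tail P m l.
Proof.
move=> SP SQ LR; rewrite /upper_tail.
have [ml|lm] := leqP m l.
  by rewrite !big_geq.
have split (F : nat -> R) : \sum_(0 <= k < m.+1) F k =
   \sum_(0 <= k < l.+1) F k + \sum_(l.+1 <= k < m.+1) F k.
  by rewrite (@big_cat_nat _ _ _ l.+1) // ltnW.
set TP := \sum_(l.+1 <= k < m.+1) P k; set TQ := \sum_(l.+1 <= k < m.+1) Q k.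
set LP := \sum_(0 <= k < l.+1) P k; set LQ := \sum_(0 <= k < l.+1) Q k.
have eP : LP = 1 - TP by rewrite -SP split /LP /TP; ring.
have eQ : LQ = 1 - TQ by rewrite -SQ split /LQ /TQ; ring.
have H : 0 <= \sum_(l.+1 <= k < m.+1) \sum_(0 <= j < l.+1) (P k * Q j - Q k * P j).
  rewrite big_nat_cond; apply: sumr_ge0 => k /andP[/andP[lk km] _].
  rewrite big_nat_cond; apply: sumr_ge0 => j /andP[/andP[_ jl] _].
  by rewrite subr_ge0 LR.
have E : \sum_(l.+1 <= k < m.+1) \sum_(0 <= j < l.+1) (P k * Q j - Q k * P j)
   = TP * LQ - TQ * LP.
  rewrite /TP /TQ /LP /LQ !mulr_suml -sumrB; apply: eq_bigr => k _.
  by rewrite sumrB !mulr_sumr.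
rewrite E eP eQ in H; move: H.
have -> : TP * (1 - TQ) - TQ * (1 - TP) = TP - TQ by ring.
by rewrite subr_ge0.
Qed.

Lemma lr_chain (P Q : nat -> R) m :
  (forall k, (k <= m)%N -> 0 < P k) -> (forall k, (k <= m)%N -> 0 < Q k) ->
  (forall i, (i < m)%N -> Q i.+1 * P i <= P i.+1 * Q i) ->
  forall j k, (j <= k)%N -> (k <= m)%N -> Q k * P j <= P k * Q j.
Proof.
move=> Pp Qp adj j k; elim: k => [|k IH] jk km.
  by move: jk; rewrite leqn0 => /eqP ->; rewrite mulrC.
move: jk; rewrite leq_eqVlt => /orP[/eqP->|jk]; first by rewrite mulrC.
have km' : (k <= m)%N by apply: ltnW.
have h1 := IH jk km'.
have h2 := adj k km.
have Pk := Pp k km'; have Qk := Qp k km'.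
have Pj := Pp j (ltnW (leq_trans jk km)); have Qj := Qp j (ltnW (leq_trans jk km)).
have PK := Pp k.+1 km; have QK := Qp k.+1 km.
rewrite -(@ler_pM2r _ (P k * Q k)); last by rewrite mulr_gt0.
have -> : Q k.+1 * P j * (P k * Q k) = (Q k.+1 * P k) * (Q k * P j) by ring.
have -> : P k.+1 * Q j * (P k * Q k) = (P k.+1 * Q k) * (P k * Q j) by ring.
apply: ler_pM => //; by rewrite mulr_ge0 // ltW.
Qed.

End Gen.
Section BSec.
Variable R : realType.
Variable B : R -> R -> R.
Hypothesis HB1 : forall x y : R, 0 < x -> 0 < y -> B (x+1) y * (x+y) = x * B x y.
Hypothesis HB2 : forall x y : R, 0 < x -> 0 < y -> B x (y+1) * (x+y) = y * B x y.
Hypothesis Hpos : forall x y : R, 0 < x -> 0 < y -> 0 < B x y.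

Lemma pascalB x y : 0 < x -> 0 < y -> B x y = B (x+1) y + B x (y+1).
Proof.
move=> x0 y0; have xy : x + y != 0 by rewrite gt_eqF // addr_gt0.
apply: (mulIf xy); rewrite mulrDl HB1 // HB2 //; ring.
Qed.

Lemma shiftB x y : 0 < x -> 0 < y -> B (x+1) y * y = x * B x (y+1).
Proof.
move=> x0 y0; have xy : x + y != 0 by rewrite gt_eqF // addr_gt0.
apply: (mulIf xy).
have -> : B (x + 1) y * y * (x + y) = (B (x + 1) y * (x + y)) * y by ring.
have -> : x * B x (y + 1) * (x + y) = x * (B x (y + 1) * (x + y)) by ring.
rewrite HB1 // HB2 //; ring.
Qed.

Lemma natS (n : nat) : n.+1%:R = n%:R + 1 :> R.
Proof. by rewrite -addn1 natrD. Qed.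

Lemma normB m : forall x y, 0 < x -> 0 < y ->
  \sum_(0 <= l < m.+1) 'C(m,l)%:R * B (l%:R + x) ((m-l)%:R + y) = B x y.
Proof.
elim: m => [|m IH] x y x0 y0.
  by rewrite big_nat1 bin0 subnn !add0r mul1r.
rewrite big_nat_recl //.
under eq_big_nat => l _ do rewrite binS natrD mulrDl.
rewrite big_split /=.
have e1 : \sum_(0 <= i < m.+1) 'C(m, i)%:R * B (i.+1%:R + x) ((m.+1 - i.+1)%:R + y)
   = B (x+1) y.
  rewrite -(IH (x+1) y) ?addr_gt0 //; apply: eq_big_nat => i _.
  by rewrite subSS natS addrAC addrA.
rewrite e1.
have e2 : 'C(m.+1, 0)%:R * B (0%:R + x) ((m.+1 - 0)%:R + y) +
  \sum_(0 <= i < m.+1) 'C(m, i.+1)%:R * B (i.+1%:R + x) ((m.+1 - i.+1)%:R + y)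
  = B x (y+1).
  rewrite -(IH x (y+1)) ?addr_gt0 //.
  rewrite big_nat_recr //= (bin_small (ltnSn m)) mul0r addr0.
  rewrite [RHS]big_nat_recl //; congr (_ + _).
    by rewrite !bin0 !subn0 !add0r -[m.+1]addn1 natrD -addrA [1 + y]addrC.
  apply: eq_big_nat => i /andP[_ im].
  by rewrite subSS -(subnSK im) (natS (m - i.+1)) -addrA [1 + y]addrC.
by rewrite addrA e2 addrC -pascalB.
Qed.

Lemma npos (n : nat) (a : R) : 0 < a -> 0 < n%:R + a.
Proof. by move=> a0; have := ler0n R n; lra. Qed.

Definition pmfB (a b : R) (m l : nat) : R :=
  if (l <= m)%N then 'C(m, l)%:R * B (l%:R + a) ((m - l)%:R + b) / B a b else 0.

Lemma pmfB_sum a b m : 0 < a -> 0 < b -> \sum_(0 <= k < m.+1) pmfB a b m k = 1.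
Proof.
move=> a0 b0.
rewrite (@eq_big_nat _ _ _ _ _ _ (fun k => 'C(m, k)%:R * B (k%:R + a) ((m - k)%:R + b) / B a b)); last first.
  by move=> i /andP[_ im]; rewrite /pmfB -ltnS im.
by rewrite -mulr_suml normB // divff // gt_eqF // Hpos.
Qed.

Lemma pmfB_gt0 a b m k : 0 < a -> 0 < b -> (k <= m)%N -> 0 < pmfB a b m k.
Proof.
move=> a0 b0 km; rewrite /pmfB km; apply: divr_gt0; last exact: Hpos.
apply: mulr_gt0; first by rewrite ltr0n bin_gt0.
by apply: Hpos; apply: npos.
Qed.

Lemma pmfB_adj a1 b1 a2 b2 m i : 0 < a1 -> 0 < b1 -> 0 < a2 -> 0 < b2 -> (i < m)%N ->
  (i%:R + a1) * ((m - i.+1)%:R + b2) <= (i%:R + a2) * ((m - i.+1)%:R + b1) ->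
  pmfB a1 b1 m i.+1 * pmfB a2 b2 m i <= pmfB a2 b2 m i.+1 * pmfB a1 b1 m i.
Proof.
move=> a10 b10 a20 b20 im H.
rewrite /pmfB im (ltnW im).
have rel a b : 0 < a -> 0 < b -> B (i.+1%:R + a) ((m - i.+1)%:R + b) =
   (i%:R + a) * B (i%:R + a) ((m - i)%:R + b) / ((m - i.+1)%:R + b).
  move=> a0 b0; have yp : 0 < (m - i.+1)%:R + b by rewrite npos.
  have e1 : i.+1%:R + a = (i%:R + a) + 1 by rewrite natS; ring.
  have e2 : (m-i)%:R + b = ((m - i.+1)%:R + b) + 1 by rewrite -(subnSK im) natS; ring.
  by rewrite e1 e2 -shiftB ?npos // mulfK // gt_eqF.
rewrite !rel //.
set x1 := i%:R + a1; set x2 := i%:R + a2.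
set y1 := (m - i.+1)%:R + b1; set y2 := (m - i.+1)%:R + b2.
set u1 := B x1 _; set u2 := B x2 _.
have y1p : 0 < y1 by rewrite npos.
have y2p : 0 < y2 by rewrite npos.
have u1p : 0 < u1 by rewrite Hpos // ?npos.
have u2p : 0 < u2 by rewrite Hpos // ?npos.
have D1 := Hpos _ _ a10 b10; have D2 := Hpos _ _ a20 b20.
set c1 := 'C(m, i.+1)%:R; set c0 := 'C(m, i)%:R.
have c0p : 0 <= c0 by rewrite ler0n.
have c1p : 0 <= c1 by rewrite ler0n.
set K := c1 * c0 * u1 * u2 / (B a1 b1 * B a2 b2 * y1 * y2).
have Kp : 0 <= K.
  rewrite /K divr_ge0 // ?mulr_ge0 // ?ltW //.
have -> : c1 * (x1 * u1 / y1) / B a1 b1 * (c0 * u2 / B a2 b2) = K * (x1 * y2).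
  rewrite /K; field; rewrite ?gt_eqF //.
have -> : c1 * (x2 * u2 / y2) / B a2 b2 * (c0 * u1 / B a1 b1) = K * (x2 * y1).
  rewrite /K; field; rewrite ?gt_eqF //.
exact: ler_wpM2l.
Qed.

End BSec.

Lemma main_gen (R : realType) (m N s : nat) (y nlo nhi : R) :
  (forall x y : R, 0 < x -> 0 < y -> Beta (x+1) y * (x+y) = x * Beta x y) ->
  (forall x y : R, 0 < x -> 0 < y -> Beta x (y+1) * (x+y) = y * Beta x y) ->
  (forall x y : R, 0 < x -> 0 < y -> 0 < Beta x y) ->
  (1 <= m)%N -> (s <= N)%N -> (0 < N + m - 1)%N ->
  0 < y -> y < 1 ->
  0 < nlo -> nlo < nhi ->
  (y > (s + m - 1)%:R / (N + m - 1)%:R ->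
     st_ge m (bb_pmf y nhi m s N) (bb_pmf y nlo m s N)) /\
  (y < s%:R / (N + m - 1)%:R ->
     st_ge m (bb_pmf y nlo m s N) (bb_pmf y nhi m s N)).
Proof.
move=> HB1 HB2 Hpos m1 sN NM y0 y1 nlo0 nlohi.
pose a n := n * y + s%:R.
pose b n := n * (1 - y) + N%:R - s%:R.
have bbE n : bb_pmf y n m s N = @pmfB R (@Beta R) (a n) (b n) m.
  apply: boolp.funext => l.
  have e1 : l%:R + n * y + s%:R = l%:R + a n by rewrite /a addrA.
  have e2 : (m - l)%:R + n * (1 - y) + N%:R - s%:R = (m - l)%:R + b n.
    by rewrite /b !addrA.
  rewrite /bb_pmf e1 e2.
  reflexivity.
have sNr : s%:R <= N%:R :> R by rewrite ler_nat.
have ap n : 0 < n -> 0 < a n.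
  move=> n0; rewrite /a; have := ler0n R s; have := mulr_gt0 n0 y0; lra.
have bp n : 0 < n -> 0 < b n.
  move=> n0; rewrite /b; have : 0 < 1 - y by lra.
  move=> h; have := mulr_gt0 n0 h; lra.
have nhi0 : 0 < nhi by lra.
have Mq : 0 < (N + m - 1)%:R :> R by rewrite ltr0n.
have eM : (N + m - 1)%:R = N%:R + m%:R - 1 :> R.
  by rewrite natrB ?natrD // addn_gt0 m1 orbT.
have eS : (s + m - 1)%:R = s%:R + m%:R - 1 :> R.
  by rewrite natrB ?natrD // addn_gt0 m1 orbT.
have emi i : (i < m)%N -> (m - i.+1)%:R = m%:R - i%:R - 1 :> R.
  by move=> im; rewrite natrB // natS; ring.
have key i : (i < m)%N ->
  (i%:R + a nhi) * ((m - i.+1)%:R + b nlo) - (i%:R + a nlo) * ((m - i.+1)%:R + b nhi)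
  = (nhi - nlo) * (y * (N%:R + m%:R - 1) - (s%:R + i%:R)).
  by move=> im; rewrite emi // /a /b; ring.
have ilt i : (i < m)%N -> i%:R <= m%:R - 1 :> R.
  move=> im; have : i.+1%:R <= m%:R :> R by rewrite ler_nat.
  rewrite natS; lra.
have chain (a1 b1 a2 b2 : R) l : 0 < a1 -> 0 < b1 -> 0 < a2 -> 0 < b2 ->
  (forall i, (i < m)%N -> (i%:R + a1) * ((m - i.+1)%:R + b2) <= (i%:R + a2) * ((m - i.+1)%:R + b1)) ->
  upper_tail (@pmfB R (@Beta R) a1 b1 m) m l <= upper_tail (@pmfB R (@Beta R) a2 b2 m) m l.
  move=> a10 b10 a20 b20 H.
  set P := @pmfB R (@Beta R) a2 b2 m; set Q := @pmfB R (@Beta R) a1 b1 m.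
  apply: (@tail_dom R P Q m l); [exact: pmfB_sum|exact: pmfB_sum|].
  move=> j k jl lk km.
  apply: (@lr_chain R P Q m _ _ _ j k (leq_trans jl (ltnW lk)) km).
  + by move=> k' k'm; apply: pmfB_gt0.
  + by move=> k' k'm; apply: pmfB_gt0.
  by move=> i im; apply: pmfB_adj => //; exact: H.
split.
- rewrite ltr_pdivrMr // eM eS => hy l.
  rewrite !bbE; apply: chain; rewrite ?ap ?bp //.
  move=> i im; rewrite -subr_ge0 key //; apply: mulr_ge0; first lra.
  have := ilt i im; lra.
- rewrite ltr_pdivlMr // eM => hy l.
  rewrite !bbE; apply: chain; rewrite ?ap ?bp //.
  move=> i im; rewrite -subr_ge0.
  have -> : (i%:R + a nlo) * ((m - i.+1)%:R + b nhi) - (i%:R + a nhi) * ((m - i.+1)%:R + b nlo)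
    = - ((i%:R + a nhi) * ((m - i.+1)%:R + b nlo) - (i%:R + a nlo) * ((m - i.+1)%:R + b nhi)).
    by rewrite opprB.
  rewrite key // -mulrN; apply: mulr_ge0; first lra.
  have := ler0n R i; lra.
Qed.

Section Ana.
Local Open Scope classical_set_scope.
Variable R : realType.
Local Notation mu := (@lebesgue_measure R).

Definition hh (x y : R) (t : R) : R := t `^ (x - 1) * (1 - t) `^ (y - 1).
Definition ee (n : nat) : R := (n.+3%:R)^-1.
Definition EE n : set R := `[ee n, 1 - ee n].
Definition JJ x y n := \int[mu]_(t in EE n) hh x y t.

Lemma ee_gt0 n : 0 < ee n.
Proof. by rewrite /ee invr_gt0 ltr0n. Qed.

Lemma ee_le n : ee n <= 3^-1.
Proof. by rewrite /ee lef_pV2 ?posrE ?ltr0n // ler_nat. Qed.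

Lemma ee_lt n : ee n < 1 - ee n.
Proof. have := ee_le n; lra. Qed.

Lemma EE_sub n : EE n `<=` `]0, 1[.
Proof.
move=> t; rewrite /EE /= !in_itv /= => /andP[h1 h2].
by have := ee_gt0 n; move=> ?; apply/andP; split; lra.
Qed.

Lemma hh_ge0 x y t : 0 <= hh x y t.
Proof. by rewrite /hh mulr_ge0 // powR_ge0. Qed.

Lemma hh_meas x y : measurable_fun setT (hh x y).
Proof.
apply: measurable_funM; first exact: measurable_powR.
apply: (measurableT_comp (measurable_powR _)).
exact: measurable_funB.
Qed.

Lemma pow_cont (p t : R) : 0 < t -> {for t, continuous (@powR R ^~ p)}.
Proof.
move=> t0; apply: differentiable_continuous; apply/derivable1_diffP.
by apply: derivable_powR; rewrite in_itv /= andbT.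
Qed.

Lemma omp_cont (p t : R) : t < 1 -> {for t, continuous (fun t : R => (1 - t) `^ p)}.
Proof.
move=> t1.
have H1 : {for t, continuous (fun t : R => 1 - t)}.
  by apply: cvgB; [exact: cvg_cst|exact: cvg_id].
have H2 : {for (1 - t), continuous (@powR R ^~ p)} by apply: pow_cont; lra.
exact: (continuous_comp H1 H2).
Qed.

Lemma hh_cont x y t : 0 < t < 1 -> {for t, continuous (hh x y)}.
Proof.
move=> /andP[t0 t1]; rewrite /continuous_at /hh; apply: cvgM; first exact: pow_cont.
have H1 : {for t, continuous (fun t : R => 1 - t)}.
  by apply: cvgB; [exact: cvg_cst|exact: cvg_id].
have H2 : {for (1 - t), continuous (@powR R ^~ (y - 1))} by apply: pow_cont; lra.
exact: (continuous_comp H1 H2).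
Qed.


Lemma EE_meas n : measurable (EE n).
Proof. exact: measurable_itv. Qed.
#[local] Hint Resolve EE_meas : core.

Lemma inEE n t : t \in EE n -> 0 < t < 1.
Proof. by rewrite inE => /EE_sub; rewrite /= in_itv. Qed.

Lemma hh_within x y n : {within EE n, continuous (hh x y)}.
Proof. by apply: continuous_in_subspaceT => t /inEE; exact: hh_cont. Qed.

Lemma hh_int x y n : mu.-integrable (EE n) (EFin \o hh x y).
Proof. by apply: continuous_compact_integrable; [exact: segment_compact|exact: hh_within]. Qed.

Lemma JJ_E x y n : (JJ x y n)%:E = (\int[mu]_(t in EE n) (hh x y t)%:E)%E.
Proof. by rewrite /JJ /Rintegral fineK //; apply: integrable_fin_num; [exact: measurable_itv|exact: hh_int]. Qed.

Lemma JJ_ge0 x y n : 0 <= JJ x y n.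
Proof. by apply: Rintegral_ge0 => t _; exact: hh_ge0. Qed.

Lemma powS (t p : R) : 0 < t -> t `^ (p + 1) = t `^ p * t.
Proof. by move=> t0; rewrite powRD ?powRr1 ?ltW //; apply/implyP => _; rewrite gt_eqF. Qed.

Lemma hh_pascal x y t : 0 < t < 1 -> hh x y t = hh (x+1) y t + hh x (y+1) t.
Proof.
move=> /andP[t0 t1]; rewrite /hh.
have -> : x + 1 - 1 = (x - 1) + 1 by ring.
have -> : y + 1 - 1 = (y - 1) + 1 by ring.
rewrite powS // powS; last by lra.
ring.
Qed.

Lemma JJ_pascal x y n : JJ x y n = JJ (x+1) y n + JJ x (y+1) n.
Proof.
rewrite /JJ -RintegralD; [|exact: measurable_itv|exact: hh_int|exact: hh_int].
by apply: eq_Rintegral => t /inEE; exact: hh_pascal.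
Qed.

Lemma pw_le1 (t p : R) : 0 < t <= 1 -> 0 <= p -> t `^ p <= 1.
Proof.
by move=> h p0; rewrite -(powRr0 t); apply: ger_powR.
Qed.

Lemma JJ_le1 x y n : 0 <= x -> 0 <= y -> JJ (x+1) (y+1) n <= 1.
Proof.
move=> x0 y0.
have ci : mu.-integrable (EE n) (EFin \o (fun=> (1:R))).
  apply: continuous_compact_integrable; first exact: segment_compact.
  by apply: continuous_subspaceT => t; exact: cvg_cst.
apply: (@le_trans _ _ (\int[mu]_(t in EE n) (1:R))).
  apply: le_Rintegral; [exact: measurable_itv|exact: hh_int|exact: ci|].
  move=> t /= /EE_sub; rewrite /= in_itv /= => /andP[t0 t1].
  rewrite /hh !addrK; apply: mulr_ile1; rewrite ?powR_ge0 //; apply: pw_le1 => //;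
   apply/andP; split; lra.
rewrite Rintegral_cst; last exact: measurable_itv.
have E1 : fine (mu `[ee n, 1 - ee n]%classic) = 1 - ee n - ee n.
  by rewrite lebesgue_measure_itv /= lte_fin ee_lt.
rewrite mul1r; apply: (@le_trans _ _ (1 - ee n - ee n)); first by rewrite E1.
have := ee_gt0 n; lra.
Qed.

Lemma ee_cvg : ee n @[n --> \oo] --> (0:R).
Proof.
have := @cvg_harmonic R; rewrite -(cvg_shiftn 2).
by apply: cvg_trans; apply: near_eq_cvg; near=> n; rewrite /ee /= addn2.
Unshelve. all: by end_near. Qed.

Lemma pee_cvg (p : R) : 0 < p -> (ee n) `^ p @[n --> \oo] --> (0:R).
Proof.
move=> p0; have := (cvg_at_rightP (@powR R ^~ p) 0 0).1 (powR_cvg0 p0).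
by apply; split; [exact: ee_gt0|exact: ee_cvg].
Qed.

Definition bd x y n : R := (ee n) `^ x * (1 - ee n) `^ y - (1 - ee n) `^ x * (ee n) `^ y.

Lemma bd_abs x y n : 0 <= x -> 0 <= y -> `|bd x y n| <= 1.
Proof.
move=> x0 y0; have := ee_gt0 n; have := ee_le n => h1 h2.
have a1 : ee n `^ x <= 1 by apply: pw_le1 => //; apply/andP; split; lra.
have a2 : ee n `^ y <= 1 by apply: pw_le1 => //; apply/andP; split; lra.
have a3 : (1 - ee n) `^ x <= 1 by apply: pw_le1 => //; apply/andP; split; lra.
have a4 : (1 - ee n) `^ y <= 1 by apply: pw_le1 => //; apply/andP; split; lra.
have b1 := powR_ge0 (ee n) x; have b2 := powR_ge0 (ee n) y.
have b3 := powR_ge0 (1 - ee n) x; have b4 := powR_ge0 (1 - ee n) y.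
rewrite /bd ler_norml; apply/andP; split; nra.
Qed.

Lemma bd_cvg x y : 0 < x -> 0 < y -> bd x y n @[n --> \oo] --> (0:R).
Proof.
move=> x0 y0.
have A p : (1 - ee n) `^ p @[n --> \oo] --> (1:R).
  have c : {for 1, continuous (@powR R ^~ p)} by apply: pow_cont; exact: ltr01.
  have B1 : (1 - ee n) @[n --> \oo] --> (1:R).
    rewrite -[X in _ --> X]subr0; apply: cvgB; [exact: cvg_cst|exact: ee_cvg].
  have := cvg_comp _ _ B1 c; rewrite /= powR1; exact.
have := cvgB (cvgM (pee_cvg _ x0) (A y)) (cvgM (A x) (pee_cvg _ y0)).
rewrite mul0r mulr0 subr0; apply => //.
Qed.


Lemma derG (y t : R) : 0 < t < 1 ->
  is_derive t 1 (fun t => (1 - t) `^ y) (- (y * (1 - t) `^ (y - 1))).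
Proof.
move=> /andP[t0 t1].
have h1 : is_derive t (1:R) (cst (1:R) - id) (0 - 1).
  by apply: is_deriveB.
have h2 : is_derive (1 - t) (1:R) (@powR R ^~ y) (y * (1 - t) `^ (y - 1)).
  by apply: is_derive1_powR; lra.
have := is_derive1_comp (f := @powR R ^~ y) (g := cst 1 - id) (x := t) h2 h1.
rewrite sub0r mulrN1 => H; exact H.
Qed.

Lemma JJ_parts x y n : 0 < x -> 0 < y ->
  y * JJ (x+1) y n - x * JJ x (y+1) n = bd x y n.
Proof.
move=> x0 y0.
have ab := ee_lt n.
have a0 := ee_gt0 n.
have inab t : t \in `[ee n, 1 - ee n]%R -> 0 < t < 1.
  by rewrite in_itv /= => /andP[h1 h2]; apply/andP; split; lra.
have inoo t : t \in `]ee n, 1 - ee n[%R -> 0 < t < 1.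
  by rewrite in_itv /= => /andP[h1 h2]; apply/andP; split; lra.
have := @Rintegration_by_parts R (@powR R ^~ x) (fun t => (1 - t) `^ y)
  (fun t => x * t `^ (x - 1)) (fun t => - (y * (1 - t) `^ (y - 1))) (ee n) (1 - ee n) ab.
have cf : {within `[ee n, 1 - ee n], continuous (fun t => x * t `^ (x - 1))}.
  apply: continuous_in_subspaceT => t; rewrite inE /= => /inab /andP[t0 _].
  by apply: cvgM; [exact: cvg_cst|exact: pow_cont].
have dF : derivable_oo_LRcontinuous (@powR R ^~ x) (ee n) (1 - ee n).
  split.
  - move=> t; rewrite ?inE /= => /inoo /andP[t0 _]; apply: derivable_powR; by rewrite in_itv /= andbT.
  - by apply: cvg_at_right_filter; exact: pow_cont.
  - by apply: cvg_at_left_filter; apply: pow_cont; lra.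
have Ff : {in `]ee n, 1 - ee n[%R, (@powR R ^~ x)^`() =1 (fun t => x * t `^ (x - 1))}.
  by move=> t; rewrite ?inE /= => /inoo /andP[t0 _]; rewrite powR_derive1 // in_itv /= andbT.
have cg : {within `[ee n, 1 - ee n], continuous (fun t => - (y * (1 - t) `^ (y - 1)))}.
  apply: continuous_in_subspaceT => t; rewrite inE /= => /inab /andP[_ t1].
  by apply: cvgN; apply: cvgM; [exact: cvg_cst|exact: omp_cont].
have dG : derivable_oo_LRcontinuous (fun t => (1 - t) `^ y) (ee n) (1 - ee n).
  split.
  - by move=> t; rewrite ?inE /= => /inoo H; case: (derG y t H).
  - by apply: cvg_at_right_filter; apply: omp_cont; lra.
  - by apply: cvg_at_left_filter; apply: omp_cont; lra.
have Gg : {in `]ee n, 1 - ee n[%R, (fun t => (1 - t) `^ y)^`() =1 (fun t => - (y * (1 - t) `^ (y - 1)))}.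
  by move=> t; rewrite ?inE /= => /inoo H; rewrite derive1E; case: (derG y t H).
move=> /(_ cf dF Ff cg dG Gg).
have E1 : \int[mu]_(t in `[ee n, 1 - ee n]) (t `^ x * - (y * (1 - t) `^ (y - 1)))
   = - y * JJ (x + 1) y n.
  rewrite /JJ -RintegralZl; [|exact: measurable_itv|exact: hh_int].
  by apply: eq_Rintegral => t _; rewrite /hh addrK; ring.
have E2 : \int[mu]_(t in `[ee n, 1 - ee n]) (x * t `^ (x - 1) * (1 - t) `^ y)
   = x * JJ x (y + 1) n.
  rewrite /JJ -RintegralZl; [|exact: measurable_itv|exact: hh_int].
  by apply: eq_Rintegral => t _; rewrite /hh addrK; ring.
rewrite E1 E2 (_ : 1 - (1 - ee n) = ee n); last by ring.
move=> h; rewrite /bd (_ : y * JJ (x + 1) y n = - (- y * JJ (x + 1) y n)); last by ring.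
rewrite h; ring.
Qed.


Lemma ee_anti m n : (m <= n)%N -> ee n <= ee m.
Proof. by move=> mn; rewrite /ee lef_pV2 ?posrE ?ltr0n // ler_nat. Qed.

Lemma EE_nd m n : (m <= n)%N -> EE m `<=` EE n.
Proof.
move=> mn t; rewrite /EE /= !in_itv /= => /andP[h1 h2].
have := ee_anti _ _ mn => h; apply/andP; split; lra.
Qed.

Lemma ev_in (t : R) : 0 < t < 1 -> \forall n \near \oo, EE n t.
Proof.
move=> /andP[t0 t1].
have m0 : 0 < Num.min t (1 - t) by rewrite lt_min t0 /=; lra.
have H := cvgr_lt (f := ee) _ ee_cvg _ m0.
near=> n.
have : ee n < Num.min t (1 - t) by near: n; exact: H.
rewrite lt_min => /andP[h1 h2].
rewrite /EE /= in_itv /=; apply/andP; split; lra.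
Unshelve. all: by end_near. Qed.

Lemma JJ_lim x y : ((JJ x y n)%:E @[n --> \oo] -->
   \int[mu]_(t in `]0%R, 1%R[) (hh x y t)%:E)%E.
Proof.
pose g' n := (EFin \o hh x y) \_ (EE n).
have mg' n : measurable_fun setT (g' n).
  apply/(measurable_restrictT _ _).1; first exact: measurable_itv.
  apply/measurable_EFinP; apply: (measurable_funS _ _ (hh_meas x y)) => //.
have g'0 n t : setT t -> (0 <= g' n t)%E.
  by move=> _; apply: erestrict_ge0 => u _; rewrite lee_fin hh_ge0.
have ndg t : setT t -> {homo g'^~ t : m n / (m <= n)%N >-> (m <= n)%E}.
  move=> _ m n mn; rewrite /g' /patch.
  case: ifPn => [/set_mem tm|_]; last by case: ifP => _ //; rewrite lee_fin hh_ge0.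
  by rewrite ifT //; apply/mem_set; exact: (EE_nd _ _ mn).
have := cvg_monotone_convergence (mu := mu) measurableT mg' g'0 ndg.
have -> : (fun n => (\int[mu]_(x0 in setT) g' n x0)%E) = (fun n => (JJ x y n)%:E).
  by apply: boolp.funext => n; rewrite JJ_E [RHS]integral_mkcond /g'.
move=> H.
have E : (\int[mu]_(t in setT) limn (g'^~ t))%E = (\int[mu]_(t in `]0%R, 1%R[) (hh x y t)%:E)%E.
  rewrite [RHS]integral_mkcond; apply: eq_integral => t _.
  rewrite /patch; case: ifPn => [/set_mem tin | tn].
    have tin' : 0 < t < 1 by move: tin; rewrite /= in_itv.
    apply: cvg_lim => //.
    apply: (cvg_trans _ (cvg_cst (hh x y t)%:E)).
    apply: near_eq_cvg; have := ev_in _ tin'; apply: filterS => n tE.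
    by rewrite /g' /patch ifT //; apply/mem_set.
    exact _.
  apply: cvg_lim => //.
  apply: (cvg_trans _ (cvg_cst 0%E)).
  apply: near_eq_cvg; apply: nearW => n; rewrite /g' /patch ifF //.
  apply/negbTE; apply: contra tn => /set_mem /EE_sub tE; exact/mem_set.
  exact _.
by rewrite -E.
Qed.


Definition II x y := (\int[mu]_(t in `]0%R, 1%R[) (hh x y t)%:E)%E.

Lemma II_ge0 x y : (0 <= II x y)%E.
Proof. by apply: integral_ge0 => t _; rewrite lee_fin hh_ge0. Qed.

Lemma bound_aux (x y J J1 J2 J11 J01 c1 c0 : R) :
  0 < x -> 0 < y -> J1 = J2 + J11 -> y * J2 - (x + 1) * J11 = c1 -> c1 <= 1 ->
  J11 <= 1 -> 0 <= J11 -> J = J1 + J01 -> y * J1 - x * J01 = c0 -> -1 <= c0 ->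
  J <= ((x + 2) / y + 1) + (y * ((x + 2) / y + 1) + 1) / x.
Proof.
move=> x0 y0 P1 Q1 b1 L1 G1 P0 Q0 b0.
set K := (x + 2) / y + 1.
have h : (x + 1) * J11 <= x + 1.
  by rewrite -[leRHS]mulr1 ler_wpM2l // ?ltW // addr_gt0.
have hJ2 : y * J2 <= x + 2.
  have -> : y * J2 = c1 + (x + 1) * J11 by rewrite -Q1; ring.
  have -> : x + 2 = 1 + (x + 1) by ring.
  exact: lerD.
have hJ1 : J1 <= K.
  rewrite P1 /K; apply: lerD => //.
  by rewrite ler_pdivlMr // mulrC.
have hJ3 : J01 <= (y * K + 1) / x.
  rewrite ler_pdivlMr // mulrC.
  have -> : x * J01 = y * J1 - c0 by rewrite -Q0; ring.
  have : y * J1 <= y * K by rewrite ler_wpM2l // ltW.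
  move: b0; clear; lra.
by rewrite P0; apply: lerD.
Qed.

Lemma JJ_bound x y n : 0 < x -> 0 < y ->
  JJ x y n <= ((x + 2) / y + 1) + (y * ((x + 2) / y + 1) + 1) / x.
Proof.
move=> x0 y0.
have b1 := bd_abs (x+1) y n (ltW (addr_gt0 x0 ltr01)) (ltW y0).
have b0 := bd_abs x y n (ltW x0) (ltW y0).
move: b1 b0; rewrite !ler_norml => /andP[_ b1] /andP[b0 _].
apply: (@bound_aux x y _ _ _ _ _ _ _ x0 y0 (JJ_pascal (x+1) y n) (JJ_parts (x+1) y n (addr_gt0 x0 ltr01) y0) b1
  (JJ_le1 x y n (ltW x0) (ltW y0)) (JJ_ge0 _ _ _) (JJ_pascal x y n) (JJ_parts x y n x0 y0) b0).
Qed.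

Lemma II_fin x y : 0 < x -> 0 < y -> II x y \is a fin_num.
Proof.
move=> x0 y0.
have H := JJ_lim x y.
have le : (II x y <= (((x + 2) / y + 1) + (y * ((x + 2) / y + 1) + 1) / x)%:E)%E.
  rewrite /II -(cvg_lim _ H) //; apply: lime_le; first by apply/cvg_ex; eexists; exact: H.
  by apply: nearW => n; rewrite lee_fin JJ_bound.
rewrite ge0_fin_numE ?II_ge0 //; exact: (le_lt_trans le (ltry _)).
Qed.

Lemma JJ_cvg (x y : R) : 0 < x -> 0 < y -> JJ x y n @[n --> \oo] --> Beta x y.
Proof.
move=> x0 y0.
have H := JJ_lim x y.
have e : (\int[mu]_(t in `]0%R, 1%R[) (hh x y t)%:E)%E = (Beta x y)%:E.
  by rewrite /Beta fineK //; exact: II_fin.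
rewrite e in H; exact: (fine_cvg H).
Qed.

Lemma lim_eq (u v : nat -> R) (a b : R) : (forall n, u n = v n) ->
  u n @[n --> \oo] --> a -> v n @[n --> \oo] --> b -> a = b.
Proof.
move=> uv ua vb.
have e : u = v by apply: boolp.funext.
rewrite e in ua.
exact: (cvg_unique _ ua vb).
Qed.

Lemma Beta_pascal (x y : R) : 0 < x -> 0 < y -> Beta x y = Beta (x+1) y + Beta x (y+1).
Proof.
move=> x0 y0.
apply: (@lim_eq (JJ x y) (fun n => JJ (x+1) y n + JJ x (y+1) n) _ _ (JJ_pascal x y)); first exact: JJ_cvg.
apply: cvgD; apply: JJ_cvg => //; exact: addr_gt0.
Qed.

Lemma Beta_parts (x y : R) : 0 < x -> 0 < y -> y * Beta (x+1) y - x * Beta x (y+1) = 0.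
Proof.
move=> x0 y0.
apply: (@lim_eq (fun n => y * JJ (x+1) y n - x * JJ x (y+1) n) (bd x y) _ _ (fun n => JJ_parts x y n x0 y0)); last exact: bd_cvg.
apply: cvgB; apply: cvgMr; apply: JJ_cvg => //; exact: addr_gt0.
Qed.


Lemma Beta_gt0 (x y : R) : 0 < x -> 0 < y -> 0 < Beta x y.
Proof.
move=> x0 y0.
have le1 : JJ x y 0 <= Beta x y.
  rewrite -lee_fin JJ_E /Beta fineK; last exact: II_fin.
  apply: ge0_subset_integral => //; first exact: measurable_itv.
  - apply/measurable_EFinP; apply: (measurable_funS _ _ (hh_meas x y)) => //.
  - by move=> t _; rewrite lee_fin hh_ge0.
  - exact: EE_sub.
have ci : mu.-integrable (EE 0) (EFin \o (fun=> ((ee 0) `^ x * (ee 0) `^ y))).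
  apply: continuous_compact_integrable; first exact: segment_compact.
  by apply: continuous_subspaceT => t; exact: cvg_cst.
have le2 : (ee 0) `^ x * (ee 0) `^ y * (1 - ee 0 - ee 0) <= JJ x y 0.
  apply: (@le_trans _ _ (\int[mu]_(t in EE 0) ((ee 0) `^ x * (ee 0) `^ y))).
    rewrite Rintegral_cst; last exact: measurable_itv.
    have E1 : fine (mu `[ee 0, 1 - ee 0]%classic) = 1 - ee 0 - ee 0.
      by rewrite lebesgue_measure_itv /= lte_fin ee_lt.
    by rewrite E1.
  apply: le_Rintegral; [exact: measurable_itv|exact: ci|exact: hh_int|].
  move=> t /= /[dup] tE /EE_sub; rewrite /= in_itv /= => /andP[t0 t1].
  move: tE; rewrite /EE /= in_itv /= => /andP[h1 h2].
  have a1 : ee 0 `^ x <= t `^ x.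
    have e0 := ee_gt0 0.
    by apply: ge0_ler_powR; rewrite ?nnegrE; lra.
  have a2 : ee 0 `^ y <= (1 - t) `^ y.
    have e0 := ee_gt0 0.
    by apply: ge0_ler_powR; rewrite ?nnegrE; lra.
  have a3 : t `^ x <= t `^ (x - 1).
    rewrite -{1}(subrK 1 x) powS //; rewrite -[leRHS]mulr1 ler_wpM2l ?powR_ge0 //; lra.
  have a4 : (1 - t) `^ y <= (1 - t) `^ (y - 1).
    rewrite -{1}(subrK 1 y) powS; last lra.
    rewrite -[leRHS]mulr1 ler_wpM2l ?powR_ge0 //; lra.
  rewrite /hh; apply: ler_pM; rewrite ?mulr_ge0 ?powR_ge0 //.
    exact: le_trans a1 a3.
  exact: le_trans a2 a4.
apply: lt_le_trans le1; apply: lt_le_trans le2.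
rewrite !mulr_gt0 ?powR_gt0 ?ee_gt0 //; have := ee_le 0; lra.
Qed.

End Ana.

Theorem theorem2 (R : realType) (m N s : nat) (y nlo nhi : R) :
  (1 <= m)%N -> (s <= N)%N -> (0 < N + m - 1)%N ->
  0 < y -> y < 1 ->
  0 < nlo -> nlo < nhi ->
  (y > (s + m - 1)%:R / (N + m - 1)%:R ->
     st_ge m (bb_pmf y nhi m s N) (bb_pmf y nlo m s N)) /\
  (y < s%:R / (N + m - 1)%:R ->
     st_ge m (bb_pmf y nlo m s N) (bb_pmf y nhi m s N)).
Proof.
apply: main_gen.
- move=> x z x0 z0.
  have h := @Beta_parts R x z x0 z0.
  rewrite (@Beta_pascal R x z x0 z0).
  have -> : Beta (x + 1) z * (x + z) =
    x * (Beta (x + 1) z + Beta x (z + 1)) + (z * Beta (x + 1) z - x * Beta x (z + 1)) by ring.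
  by rewrite h addr0.
- move=> x z x0 z0.
  have h := @Beta_parts R x z x0 z0.
  rewrite (@Beta_pascal R x z x0 z0).
  have -> : Beta x (z + 1) * (x + z) =
    z * (Beta (x + 1) z + Beta x (z + 1)) - (z * Beta (x + 1) z - x * Beta x (z + 1)) by ring.
  by rewrite h subr0.
- by move=> x z x0 z0; exact: (@Beta_gt0 R x z x0 z0).
Qed.
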